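(* Let $l,m\in\mathbb{N}$ and let $q(x)=x^6-(l+m+3)x^4+(lm+l+m+3)x^2-1$. If $q(x)$ is reducible over $\mathbb{Q}$, then the set of all positive eigenvalues of the adjacency matrix of the double subdivided star $T_{l,m}$, with any one of them removed, is linearly independent over $\mathbb{Q}$.
   Context: A subdivided star $SK_{1,l}$ is obtained by identifying exactly one pendant (end) vertex from each of $l$ copies of the path $P_3$ on three vertices; the identified vertex is the coalescence vertex. The double subdivided star $T_{l,m}$ is obtained from $SK_{1,l}$ and $SK_{1,m}$ by adding one edge joining their two coalescence vertices. Eigenvalues are those of the adjacency matrix; the characteristic polynomial of $T_{l,m}$ is $(x^2-1)^{l+m-2}q(x)$. *)

(* Defs.v *)
From HB Require Import structures.
From mathcomp Require Import all_boot all_order all_algebra all_field.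
Set Implicit Arguments. Unset Strict Implicit. Unset Printing Implicit Defensive.
Import Order.TTheory GRing.Theory Num.Theory.
Local Open Scope ring_scope.

(* Double subdivided star T_{l,m} on n = 2l+2m+2 vertices, numbered:
   0 = coalescence vertex c1 of SK_{1,l},  1 = coalescence vertex c2 of SK_{1,m},
   2+i       (i < l) : middle vertex of the i-th P3 of SK_{1,l},
   2+l+i     (i < l) : end vertex of the i-th P3 of SK_{1,l},
   2+2l+j    (j < m) : middle vertex of the j-th P3 of SK_{1,m},
   2+2l+m+j  (j < m) : end vertex of the j-th P3 of SK_{1,m}. *)
Definition Tnum (l m : nat) : nat := (2 * (l + m)).+2.

Definition Tarc (l m : nat) (i j : nat) : bool :=
  [|| (i == 0%N) && (j == 1%N),
      (i == 0%N) && (2 <= j < 2 + l)%N,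
      (2 <= i < 2 + l)%N && (j == i + l)%N,
      (i == 1%N) && (2 + 2 * l <= j < 2 + 2 * l + m)%N
    | (2 + 2 * l <= i < 2 + 2 * l + m)%N && (j == i + m)%N].

Definition Tedge (l m : nat) (i j : nat) : bool := Tarc l m i j || Tarc l m j i.

Definition adjT (l m : nat) : 'M[algC]_(Tnum l m) :=
  \matrix_(i, j) (Tedge l m i j)%:R.

Definition q_Tlm (l m : nat) : {poly rat} :=
  'X^6 - ((l + m + 3)%:R)%:P * 'X^4
       + ((l * m + l + m + 3)%:R)%:P * 'X^2 - 1.

Definition Qlin_indep (P : pred algC) : Prop :=
  forall (s : seq algC) (c : algC -> rat),
    uniq s -> all P s ->
    \sum_(x <- s) ratr (c x) * x = 0 ->
    all (fun x => c x == 0) s.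

(* Main.v *)
Require Import Defs.
From HB Require Import structures.
From mathcomp Require Import all_boot all_order all_algebra all_field.
From mathcomp Require Import zify ring lra.
From Stdlib Require Import Classical.
Import Order.TTheory GRing.Theory Num.Theory.
Local Open Scope ring_scope.

Ltac split_or := repeat match goal with |- is_true (_ || _) -> _ => case/orP end.
Ltac solve_and := repeat (apply/andP; split); lia.
Ltac solve_or := first [ apply/orP; left; solve_and | apply/orP; right; solve_or | solve_and ].
Ltac te := apply/idP/idP; [split_or; lia| split_or; move=> *; solve_or].
Lemma TE_end l m k i : (i < l)%N -> Tedge l m k (2 + l + i) = (k == 2 + i)%N.
Proof. move=> h; rewrite /Tedge /Tarc. te. Qed.
Lemma TE_mid l m k i : (i < l)%N -> Tedge l m k (2 + i) = (k == 0)%N || (k == 2 + l + i)%N.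
Proof. move=> h; rewrite /Tedge /Tarc. te. Qed.
Lemma TE_c1 l m k : (0 < l)%N -> Tedge l m k 0 = (k == 1)%N || (2 <= k < 2 + l)%N.
Proof. move=> h; rewrite /Tedge /Tarc. te. Qed.
Lemma TE_c2 l m k : (0 < m)%N -> Tedge l m k 1 = (k == 0)%N || (2 + 2 * l <= k < 2 + 2 * l + m)%N.
Proof. move=> h; rewrite /Tedge /Tarc. te. Qed.
Lemma TE_mid2 l m k i : (i < m)%N -> Tedge l m k (2 + 2 * l + i) = (k == 1)%N || (k == 2 + 2 * l + m + i)%N.
Proof. move=> h; rewrite /Tedge /Tarc. te. Qed.
Lemma TE_end2 l m k i : (i < m)%N -> Tedge l m k (2 + 2 * l + m + i) = (k == 2 + 2 * l + i)%N.
Proof. move=> h; rewrite /Tedge /Tarc. te. Qed.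

Section Sums.
Variable (f : nat -> algC) (n : nat).

Lemma sum_ind1 c : (c < n)%N -> \sum_(i < n) f i * ((i : nat) == c)%:R = f c.
Proof.
move=> hc; rewrite (bigD1 (Ordinal hc)) //= eqxx mulr1 big1 ?addr0 // => i hi.
have -> : (nat_of_ord i == c) = false.
  by apply/negbTE; apply: contra hi => /eqP h; apply/eqP/val_inj.
by rewrite mulr0.
Qed.

Lemma sum_indI a b : (a + b <= n)%N ->
  \sum_(i < n) f i * (a <= i < a + b)%:R = \sum_(k < b) f (a + k)%N.
Proof.
move=> hab; rewrite -(big_mkord xpredT (fun i => f i * (a <= i < a + b)%:R)).
rewrite (big_cat_nat (n:=a)) //=; last by lia.
rewrite big1_seq ?add0r; last first.
  move=> i; rewrite mem_iota => hi.
  by rewrite (_ : (a <= i < a + b)%N = false) ?mulr0 //; move: hi; lia.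
rewrite (big_cat_nat (n:=a + b)) //=; last by lia.
rewrite [X in _ + X]big1_seq ?addr0; last first.
  move=> i; rewrite mem_iota => hi.
  by rewrite (_ : (a <= i < a + b)%N = false) ?mulr0 //; move: hi; lia.
rewrite -{1}(add0n a) big_addn -/(index_iota 0 (a + b - a)) big_mkord.
have -> : (a + b - a = b)%N by lia.
apply: eq_bigr => i _; have hi := ltn_ord i; rewrite (_ : (a <= i + a < a + b)%N = true); last by lia.
by rewrite mulr1 addnC.
Qed.

End Sums.

Lemma natr_or (b1 b2 : bool) : ~~ (b1 && b2) -> (b1 || b2)%:R = b1%:R + b2%:R :> algC.
Proof. by case: b1; case: b2 => //= _; rewrite ?addr0 ?add0r. Qed.


Lemma eig_q l m x : (0 < l)%N -> (0 < m)%N -> eigenvalue (adjT l m) x -> x ^+ 2 != 1 ->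
  x ^+ 6 - (l + m + 3)%:R * x ^+ 4 + (l * m + l + m + 3)%:R * x ^+ 2 - 1 = 0.
Proof.
move=> l0 m0 /eigenvalueP [v hv nz] x2.
set n := Tnum l m.
pose f k := v 0 (inord k).
have hf : forall i : 'I_n, v 0 i = f i by move=> i; rewrite /f inord_val.
have col : forall j, (j < n)%N -> \sum_(i < n) f i * (Tedge l m i j)%:R = x * f j.
  move=> j hj; have := congr1 (fun M : 'rV[algC]_n => M 0 (inord j)) hv; rewrite !mxE.
  move=> <-; apply: eq_bigr => i _; rewrite hf mxE inordK //.
have hn : n = (2 + 2 * l + m + m)%N by rewrite /n /Tnum; lia.
have Eend : forall i, (i < l)%N -> f (2 + i)%N = x * f (2 + l + i)%N.
  move=> i hi; rewrite -col; last by lia.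
  under eq_bigr do rewrite TE_end //.
  by rewrite sum_ind1 //; lia.
have Emid : forall i, (i < l)%N -> f 0%N + f (2 + l + i)%N = x * f (2 + i)%N.
  move=> i hi; rewrite -col; last by lia.
  have -> : \sum_(k < n) f k * (Tedge l m k (2 + i))%:R =
     \sum_(k < n) (f k * ((k : nat) == 0)%:R + f k * ((k : nat) == 2 + l + i)%:R).
    by apply: eq_bigr => k _; rewrite TE_mid // natr_or ?mulrDr //; lia.
  by rewrite big_split /= !sum_ind1 //; lia.
have Ec1 : f 1%N + \sum_(i < l) f (2 + i)%N = x * f 0%N.
  rewrite -col; last by lia.
  have -> : \sum_(k < n) f k * (Tedge l m k 0)%:R =
     \sum_(k < n) (f k * ((k : nat) == 1)%:R + f k * (2 <= k < 2 + l)%:R).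
    by apply: eq_bigr => k _; rewrite TE_c1 // natr_or ?mulrDr //; lia.
  by rewrite big_split /= sum_ind1 ?sum_indI //; lia.
have Ec2 : f 0%N + \sum_(i < m) f (2 + 2 * l + i)%N = x * f 1%N.
  rewrite -col; last by lia.
  have -> : \sum_(k < n) f k * (Tedge l m k 1)%:R =
     \sum_(k < n) (f k * ((k : nat) == 0)%:R + f k * (2 + 2 * l <= k < 2 + 2 * l + m)%:R).
    by apply: eq_bigr => k _; rewrite TE_c2 // natr_or ?mulrDr //; lia.
  by rewrite big_split /= sum_ind1 ?sum_indI //; lia.
have Eend2 : forall i, (i < m)%N -> f (2 + 2 * l + i)%N = x * f (2 + 2 * l + m + i)%N.
  move=> i hi; rewrite -col; last by lia.
  under eq_bigr do rewrite TE_end2 //.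
  by rewrite sum_ind1 //; lia.
have Emid2 : forall i, (i < m)%N -> f 1%N + f (2 + 2 * l + m + i)%N = x * f (2 + 2 * l + i)%N.
  move=> i hi; rewrite -col; last by lia.
  have -> : \sum_(k < n) f k * (Tedge l m k (2 + 2 * l + i))%:R =
     \sum_(k < n) (f k * ((k : nat) == 1)%:R + f k * ((k : nat) == 2 + 2 * l + m + i)%:R).
    by apply: eq_bigr => k _; rewrite TE_mid2 // natr_or ?mulrDr //; lia.
  by rewrite big_split /= !sum_ind1 //; lia.
set a := f 0%N; set b := f 1%N.
have hu : forall i, (i < l)%N -> (x ^+ 2 - 1) * f (2 + i)%N = x * a.
  move=> i hi; have e1 := Eend i hi; have e2 := Emid i hi.
  have -> : a = x * f (2 + i)%N - f (2 + l + i)%N by rewrite -e2 addrK.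
  rewrite e1; ring.
have hu2 : forall i, (i < m)%N -> (x ^+ 2 - 1) * f (2 + 2 * l + i)%N = x * b.
  move=> i hi; have e1 := Eend2 i hi; have e2 := Emid2 i hi.
  have -> : b = x * f (2 + 2 * l + i)%N - f (2 + 2 * l + m + i)%N by rewrite -e2 addrK.
  rewrite e1; ring.
have S1 : (x ^+ 2 - 1) * \sum_(i < l) f (2 + i)%N = l%:R * (x * a).
  rewrite mulr_sumr (eq_bigr (fun _ => x * a)); last by move=> i _; apply: hu.
  by rewrite sumr_const card_ord mulr_natl.
have S2 : (x ^+ 2 - 1) * \sum_(i < m) f (2 + 2 * l + i)%N = m%:R * (x * b).
  rewrite mulr_sumr (eq_bigr (fun _ => x * b)); last by move=> i _; apply: hu2.
  by rewrite sumr_const card_ord mulr_natl.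
have eq1 : (x ^+ 2 - 1) * x * a - l%:R * x * a - (x ^+ 2 - 1) * b = 0.
  have h : (x ^+ 2 - 1) * (x * a) = (x ^+ 2 - 1) * b + l%:R * (x * a) by rewrite -{1}Ec1 mulrDr S1.
  transitivity ((x ^+ 2 - 1) * (x * a) - ((x ^+ 2 - 1) * b + l%:R * (x * a))); first by ring.
  by rewrite h subrr.
have eq2 : (x ^+ 2 - 1) * x * b - m%:R * x * b - (x ^+ 2 - 1) * a = 0.
  have h : (x ^+ 2 - 1) * (x * b) = (x ^+ 2 - 1) * a + m%:R * (x * b) by rewrite -{1}Ec2 mulrDr S2.
  transitivity ((x ^+ 2 - 1) * (x * b) - ((x ^+ 2 - 1) * a + m%:R * (x * b))); first by ring.
  by rewrite h subrr.
have D0 : x ^+ 2 - 1 != 0 by rewrite subr_eq0.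
have [a0|a0] := eqVneq a 0.
  have b0 : b = 0.
    have e : (x ^+ 2 - 1) * b = - ((x ^+ 2 - 1) * x * a - l%:R * x * a - (x ^+ 2 - 1) * b).
      by rewrite a0; ring.
    by rewrite eq1 oppr0 in e; move/eqP: e; rewrite mulf_eq0 (negbTE D0) => /eqP.
  exfalso; move/negP: nz; apply; apply/eqP/rowP => k; rewrite !mxE hf.
  have hk : (k < 2 + 2 * l + m + m)%N by have := ltn_ord k; rewrite /Tnum; lia.
  have [k0|k0] := eqVneq (k : nat) 0%N; first by rewrite k0; exact: a0.
  have [k1|k1] := eqVneq (k : nat) 1%N; first by rewrite k1; exact: b0.
  have hu0 : forall i, (i < l)%N -> f (2 + i)%N = 0.
    move=> i hi; apply/eqP; have := hu i hi; rewrite a0 mulr0 => /eqP.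
    by rewrite mulf_eq0 (negbTE D0).
  have hu20 : forall i, (i < m)%N -> f (2 + 2 * l + i)%N = 0.
    move=> i hi; apply/eqP; have := hu2 i hi; rewrite b0 mulr0 => /eqP.
    by rewrite mulf_eq0 (negbTE D0).
  case: (ltnP k (2 + l)) => h1.
    have -> : (k : nat) = (2 + (k - 2))%N by lia.
    by apply: hu0; lia.
  case: (ltnP k (2 + 2 * l)) => h2.
    have -> : (k : nat) = (2 + l + (k - 2 - l))%N by lia.
    have e2 := Emid (k - 2 - l)%N ltac:(lia).
    by move: e2; rewrite hu0 ?mulr0 -/a ?a0 ?add0r //; lia.
  case: (ltnP k (2 + 2 * l + m)) => h3.
    have -> : (k : nat) = (2 + 2 * l + (k - 2 - 2 * l))%N by lia.
    by apply: hu20; lia.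
  have -> : (k : nat) = (2 + 2 * l + m + (k - 2 - 2 * l - m))%N by lia.
  have e2 := Emid2 (k - 2 - 2 * l - m)%N ltac:(lia).
  by move: e2; rewrite hu20 ?mulr0 -/b ?b0 ?add0r //; lia.
have key : ((x ^+ 2 - 1) * x * (x ^+ 2 - 1) * x - (x ^+ 2 - 1) * x * l%:R * x
   - (x ^+ 2 - 1) * x * m%:R * x + l%:R * m%:R * x * x - (x ^+ 2 - 1) ^+ 2) * a = 0.
  have -> : ((x ^+ 2 - 1) * x * (x ^+ 2 - 1) * x - (x ^+ 2 - 1) * x * l%:R * x
   - (x ^+ 2 - 1) * x * m%:R * x + l%:R * m%:R * x * x - (x ^+ 2 - 1) ^+ 2) * a =
   ((x ^+ 2 - 1) * x - m%:R * x) * ((x ^+ 2 - 1) * x * a - l%:R * x * a - (x ^+ 2 - 1) * b)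
   + (x ^+ 2 - 1) * ((x ^+ 2 - 1) * x * b - m%:R * x * b - (x ^+ 2 - 1) * a) by ring.
  by rewrite eq1 eq2 !mulr0 addr0.
move: key => /eqP; rewrite mulf_eq0 (negbTE a0) orbF => /eqP key.
rewrite -key !natrD !natrM; ring.
Qed.

Definition pC (l m : nat) : {poly rat} :=
  'X^3 - ((l + m + 3)%:R)%:P * 'X^2 + ((l * m + l + m + 3)%:R)%:P * 'X - 1.

Notation pQ := (map_poly (ratr : rat -> algC)).

Lemma cub_eval (c1 c2 : rat) (z : algC) :
  (pQ ('X^3 - c1%:P * 'X^2 + c2%:P * 'X - 1)).[z] = z ^+ 3 - ratr c1 * z ^+ 2 + ratr c2 * z - 1.
Proof.
rewrite !(rmorphB, rmorphD, rmorphXn, rmorphM, map_polyC, map_polyX, rmorph1) /= !map_polyX !map_polyC !hornerE.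
ring.
Qed.

Lemma six_eval (c1 c2 : rat) (z : algC) :
  (pQ ('X^6 - c1%:P * 'X^4 + c2%:P * 'X^2 - 1)).[z] = z ^+ 6 - ratr c1 * z ^+ 4 + ratr c2 * z ^+ 2 - 1.
Proof.
rewrite !(rmorphB, rmorphD, rmorphXn, rmorphM, map_polyC, map_polyX, rmorph1) /= !map_polyX !map_polyC !hornerE.
ring.
Qed.

Lemma pC_eval l m (z : algC) : (pQ (pC l m)).[z] =
  z ^+ 3 - (l + m + 3)%:R * z ^+ 2 + (l * m + l + m + 3)%:R * z - 1.
Proof. by rewrite /pC cub_eval !ratr_nat. Qed.

Lemma q_eval l m (z : algC) : (pQ (q_Tlm l m)).[z] =
  z ^+ 6 - (l + m + 3)%:R * z ^+ 4 + (l * m + l + m + 3)%:R * z ^+ 2 - 1.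
Proof. by rewrite /q_Tlm six_eval !ratr_nat. Qed.

Lemma q_p_eval l m (z : algC) : (pQ (q_Tlm l m)).[z] = (pQ (pC l m)).[z ^+ 2].
Proof. rewrite q_eval pC_eval; ring. Qed.

Lemma q_comp l m : q_Tlm l m = pC l m \Po 'X^2.
Proof.
rewrite /q_Tlm /pC !(comp_polyB, comp_polyD, comp_Xn_poly, comp_polyM, comp_polyC, comp_polyX).
by rewrite -!exprM.
Qed.

Lemma size_rest (c1 c2 : rat) : (size (- (c1%:P * 'X^2) + (c2%:P * 'X - 1))%R < 4)%N.
Proof.
have a1 : (size (c1%:P * 'X^2)%R <= 3)%N.
  apply: leq_trans (size_mul_leq _ _) _; rewrite size_polyXn.
  by move: (size_polyC_leq1 c1); case: (size _) => [|[|]].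
have b1 : (size (c2%:P * 'X)%R <= 2)%N.
  apply: leq_trans (size_mul_leq _ _) _; rewrite size_polyX.
  by move: (size_polyC_leq1 c2); case: (size _) => [|[|]].
rewrite (leq_ltn_trans (size_polyD _ _)) // gtn_max size_polyN.
rewrite (leq_ltn_trans a1) //=.
rewrite (leq_ltn_trans (size_polyD _ _)) // gtn_max size_polyN size_poly1 andbT.
by rewrite (leq_ltn_trans b1).
Qed.

Lemma size_pC l m : size (pC l m) = 4%N.
Proof. by rewrite /pC -!addrA size_polyDl ?size_polyXn // size_rest. Qed.

Lemma pC_monic l m : pC l m \is monic.
Proof. by rewrite /pC -!addrA monicE lead_coefDl ?lead_coefXn // size_polyXn size_rest. Qed.

Lemma pQ_pC l m : pQ (pC l m) =
  'X^3 - ((l + m + 3)%:R)%:P * 'X^2 + ((l * m + l + m + 3)%:R)%:P * 'X - 1.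
Proof.
rewrite /pC !(rmorphB, rmorphD, rmorphXn, rmorphM, map_polyC, map_polyX, rmorph1) /= !map_polyX !map_polyC /=.
by rewrite !ratr_nat.
Qed.

Lemma pC_noroot l m (t : rat) : (0 < l)%N -> (0 < m)%N -> ~~ root (pC l m) t.
Proof.
move=> l0 m0; apply/negP => rt.
have rz : root (pQ (pC l m)) (ratr t) by rewrite fmorph_root.
have Az : ratr t \in Aint.
  apply: root_monic_Aint rz _ _; first by rewrite map_monic pC_monic.
  rewrite pQ_pC; apply/polyOverP => i.
  rewrite !(coefB, coefD, coefCM, coefXn, coefX, coef1).
  by rewrite ?(rpredB, rpredD, rpredM, rpred_nat, natr_int).
have /intrP [k hk] := Cint_rat_Aint (Crat_rat t) Az.
move: rz; rewrite /root pC_eval hk => /eqP.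
have -> : (k%:~R : algC) ^+ 3 - (l + m + 3)%:R * k%:~R ^+ 2 + (l * m + l + m + 3)%:R * k%:~R - 1
  = ((k ^+ 3 - (l + m + 3)%:R * k ^+ 2 + (l * m + l + m + 3)%:R * k - 1 : int)%:~R : algC).
  by rewrite !(rmorphB, rmorphD, rmorphM, rmorphXn, rmorph1, rmorph_nat).
move/eqP; rewrite intr_eq0 => /eqP e.
have : (k ^+ 2 - (l + m + 3)%:R * k + (l * m + l + m + 3)%:R) * k = 1.
  by apply/eqP; rewrite -subr_eq0 -e; apply/eqP; ring.
move/intUnitRing.unitzPl; rewrite qualifE => /orP [] /eqP k1; rewrite k1 in e; move: e.
  by rewrite !natrD natrM; lia.
by rewrite !natrD natrM; lia.
Qed.

Lemma princ {P K : {poly rat}} {y : algC} : irreducible_poly P ->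
  root (pQ P) y -> root (pQ K) y -> P %| K.
Proof.
move=> [_ irrP] rP rK.
have [M [_ monM] dv] := minCpolyP y.
have MP : M %| P by rewrite -dv.
have MK : M %| K by rewrite -dv.
have sM : size M != 1%N.
  apply/negP; rewrite size_poly_eq1 eqp_monic ?monic1 // => /eqP M1.
  by have := dv M; rewrite dvdpp M1 rmorph1 (negbTE (root1 _)).
have := irrP M sM MP => eqMP.
by rewrite -(eqp_dvdl _ eqMP).
Qed.

Lemma irr_pC l m : (0 < l)%N -> (0 < m)%N -> irreducible_poly (pC l m).
Proof. by move=> l0 m0; apply: cubic_irreducible; [rewrite size_pC | move=> t; exact: pC_noroot]. Qed.

Lemma half_eq (a b : algC) : a * 2 = b * 2 -> a = b.
Proof. by apply: mulIf; rewrite pnatr_eq0. Qed.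

Lemma vieta (S L y1 y2 y3 : algC) :
  (forall z, z ^+ 3 - S * z ^+ 2 + L * z - 1 = (z - y1) * (z - y2) * (z - y3)) ->
  [/\ y1 + y2 + y3 = S, y1 * y2 + y1 * y3 + y2 * y3 = L & y1 * y2 * y3 = 1].
Proof.
move=> h; have h0 := h 0; have h1 := h 1; have hm := h (-1).
have e3 : y1 * y2 * y3 = 1.
  transitivity (- ((0 - y1) * (0 - y2) * (0 - y3))); first by ring.
  rewrite -h0; ring.
have e2 : y1 * y2 + y1 * y3 + y2 * y3 = L.
  apply: half_eq; symmetry.
  transitivity ((1 ^+ 3 - S * 1 ^+ 2 + L * 1 - 1) - ((-1) ^+ 3 - S * (-1) ^+ 2 + L * (-1) - 1) - 2); first by ring.
  rewrite h1 hm; ring.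
split => //.
apply: half_eq; symmetry.
transitivity (- (1 ^+ 3 - S * 1 ^+ 2 + L * 1 - 1) - ((-1) ^+ 3 - S * (-1) ^+ 2 + L * (-1) - 1) - 2); first by ring.
rewrite h1 hm.
transitivity ((y1 + y2 + y3) * 2 + 2 * (y1 * y2 * y3 - 1)); first by ring.
by rewrite e3 subrr mulr0 addr0.
Qed.

Lemma quad_eval (c0 c1 c2 : rat) (z : algC) :
  (pQ (c0%:P * 'X^2 - c1%:P * 'X + c2%:P)).[z] = ratr c0 * z ^+ 2 - ratr c1 * z + ratr c2.
Proof.
rewrite !(rmorphB, rmorphD, rmorphXn, rmorphM, map_polyC, map_polyX, rmorph1) /= !map_polyX !map_polyC !hornerE.
ring.
Qed.

Lemma no_double l m (a b : algC) : (0 < l)%N -> (0 < m)%N ->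
  (forall z, (pQ (pC l m)).[z] = (z - a) * (z - a) * (z - b)) -> False.
Proof.
move=> l0 m0 h.
have [e1 e2 e3] := @vieta _ _ a a b (fun z => etrans (esym (pC_eval l m z)) (h z)).
pose Q2 : {poly rat} := (3%:R)%:P * 'X^2 - ((2 * (l + m + 3))%:R)%:P * 'X + ((l * m + l + m + 3)%:R)%:P.
have evQ z : (pQ Q2).[z] = 3%:R * z ^+ 2 - 2%:R * (l + m + 3)%:R * z + (l * m + l + m + 3)%:R.
  by rewrite quad_eval !ratr_nat natrM.
have ra : root (pQ Q2) a by rewrite /root evQ -e1 -e2; apply/eqP; ring.
have rpa : root (pQ (pC l m)) a by rewrite /root h subrr !mul0r.
have rpb : root (pQ (pC l m)) b by rewrite /root h subrr !mulr0.
have dv := @princ _ _ _ (irr_pC l m l0 m0) rpa ra.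
have rb : root (pQ Q2) b by apply: root_dvdp rpb; rewrite dvdp_map.
have ab : a = b.
  move: rb; rewrite /root evQ -e1 -e2 => /eqP hb.
  have : (a - b) ^+ 2 = 0 by rewrite -hb; ring.
  by move/eqP; rewrite expf_eq0 /= subr_eq0 => /eqP.
have : a = ratr ((l + m + 3)%:R / 3%:R).
  rewrite fmorph_div !rmorph_nat -e1 -ab.
  apply: (mulIf (x := 3%:R)); first by rewrite pnatr_eq0.
  rewrite mulfVK ?pnatr_eq0 //; ring.
move=> ha; move: rpa; rewrite ha fmorph_root.
by move/negP: (pC_noroot l m ((l + m + 3)%:R / 3%:R) l0 m0).
Qed.

Lemma pC_roots l m : (0 < l)%N -> (0 < m)%N ->
  exists y1 y2 y3 : algC, [/\ y1 != y2, y1 != y3, y2 != y3 &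
    forall z, (pQ (pC l m)).[z] = (z - y1) * (z - y2) * (z - y3)].
Proof.
move=> l0 m0.
have [r hr] := closed_field_poly_normal (pQ (pC l m)).
have mon : pQ (pC l m) \is monic by rewrite map_monic pC_monic.
rewrite (monicP mon) scale1r in hr.
have : size r = 3%N.
  have := size_prod_XsubC r id; rewrite -hr size_map_poly size_pC.
  by case.
case: r hr => [|y1 [|y2 [|y3 [|? ?]]]] //= hr _.
have hz z : (pQ (pC l m)).[z] = (z - y1) * (z - y2) * (z - y3).
  rewrite hr !big_cons big_nil !hornerE; exact: mulr1.
exists y1, y2, y3; split => //.
- apply/negP => /eqP e; apply: (no_double l m y1 y3 l0 m0) => z.
  by rewrite hz e.
- apply/negP => /eqP e; apply: (no_double l m y1 y2 l0 m0) => z.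
  by rewrite hz e; ring.
- apply/negP => /eqP e; apply: (no_double l m y2 y1 l0 m0) => z.
  by rewrite hz e; ring.
Qed.


Lemma size_q l m : size (q_Tlm l m) = 7%N.
Proof.
have := size_comp_poly (pC l m) 'X^2; rewrite -q_comp size_pC size_polyXn.
by case: (size (q_Tlm l m)) => [|[|[|[|[|[|[|[|?]]]]]]]].
Qed.

Lemma sq_eval (U : {poly rat}) (z : algC) : (pQ (U ^+ 2 - 'X)).[z] = (pQ U).[z] ^+ 2 - z.
Proof. by rewrite rmorphB rmorphXn /= map_polyX !hornerE. Qed.

Lemma red_U l m : (0 < l)%N -> (0 < m)%N -> ~ irreducible_poly (q_Tlm l m) ->
  exists U : {poly rat}, forall y, root (pQ (pC l m)) y -> (pQ U).[y] ^+ 2 = y.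
Proof.
move=> l0 m0 nirr.
have [h hh] : exists h : {poly rat}, ~ (size h != 1%N -> h %| q_Tlm l m -> h %= q_Tlm l m).
  apply: not_all_ex_not => H; apply: nirr; split => //; by rewrite size_q.
have [sh hh2] := imply_to_and _ _ hh; have [hq nhq] := imply_to_and _ _ hh2.
have [r rr] : exists r, root (pQ h) r by apply/closed_rootP; rewrite size_map_poly.
have rq : root (pQ (q_Tlm l m)) r by apply: root_dvdp rr; rewrite dvdp_map.
set y := r ^+ 2.
have ry : root (pQ (pC l m)) y by move: rq; rewrite /root q_p_eval.
set E := even_poly h; set O := odd_poly h.
have hEO := poly_even_odd h.
have evh : (pQ h).[r] = (pQ E).[y] + (pQ O).[y] * r.
  rewrite -[in LHS]hEO rmorphD rmorphM /= !map_comp_poly hornerD hornerM !horner_comp.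
  by rewrite map_polyX hornerX rmorphXn /= map_polyX hornerXn.
have irr := irr_pC l m l0 m0.
have [O0|O0] := eqVneq (pQ O).[y] 0.
  have E0 : (pQ E).[y] = 0 by have := rr; rewrite /root evh O0 mul0r addr0 => /eqP.
  have dE : pC l m %| E by apply: (princ irr ry); rewrite /root E0.
  have dO : pC l m %| O by apply: (princ irr ry); rewrite /root O0.
  exfalso; apply: nhq; rewrite /eqp hq /= -hEO q_comp.
  by apply: dvdp_add; [|apply: dvdp_mulr]; apply: dvdp_comp_poly.
have cop : coprimep (pC l m) O.
  rewrite irreducible_poly_coprime //; apply/negP => dO.
  by move/negP: O0; apply; apply: (root_dvdp _ ry); rewrite dvdp_map.
have [[u v] /= huv] := Bezout_eq1_coprimepP _ _ cop.
have hv : (pQ v).[y] * (pQ O).[y] = 1.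
  have := congr1 (fun P => (pQ P).[y]) huv; rewrite /= rmorphD !rmorphM rmorph1 /=.
  by rewrite hornerD !hornerM (eqP ry) mulr0 add0r hornerC.
have hr : r = (pQ (- (E * v))).[y].
  rewrite rmorphN rmorphM /= hornerN hornerM.
  have e : (pQ E).[y] + (pQ O).[y] * r = 0 by rewrite -evh; apply/eqP.
  have -> : (pQ E).[y] = - ((pQ O).[y] * r) by apply/eqP; rewrite -addr_eq0 e.
  rewrite mulNr opprK; transitivity ((pQ v).[y] * (pQ O).[y] * r); first by rewrite hv mul1r.
  ring.
exists (- (E * v)) => y' ry'.
have dU : pC l m %| (- (E * v)) ^+ 2 - 'X.
  by apply: (princ irr ry); rewrite /root sq_eval -hr subrr.
by apply/eqP; rewrite -subr_eq0 -sq_eval; apply: (root_dvdp _ ry'); rewrite dvdp_map.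
Qed.

Definition cubic (c1 c2 c3 : rat) : {poly rat} := 'X^3 - c1%:P * 'X^2 + c2%:P * 'X - c3%:P.

Lemma cubic_evalC c1 c2 c3 (z : algC) :
  (pQ (cubic c1 c2 c3)).[z] = z ^+ 3 - ratr c1 * z ^+ 2 + ratr c2 * z - ratr c3.
Proof.
rewrite /cubic !(rmorphB, rmorphD, rmorphXn, rmorphM, map_polyC, map_polyX, rmorph1) /= !map_polyX !map_polyC !hornerE.
ring.
Qed.

Lemma cubic_eval c1 c2 c3 (z : rat) :
  (cubic c1 c2 c3).[z] = z ^+ 3 - c1 * z ^+ 2 + c2 * z - c3.
Proof. rewrite /cubic !hornerE; ring. Qed.

Lemma size_cubic c1 c2 c3 : size (cubic c1 c2 c3) = 4%N.
Proof.
have a1 : (size (c1%:P * 'X^2)%R <= 3)%N.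
  apply: leq_trans (size_mul_leq _ _) _; rewrite size_polyXn.
  by move: (size_polyC_leq1 c1); case: (size _) => [|[|]].
have b1 : (size (c2%:P * 'X)%R <= 2)%N.
  apply: leq_trans (size_mul_leq _ _) _; rewrite size_polyX.
  by move: (size_polyC_leq1 c2); case: (size _) => [|[|]].
rewrite /cubic -!addrA size_polyDl ?size_polyXn //.
rewrite (leq_ltn_trans (size_polyD _ _)) // gtn_max size_polyN.
rewrite (leq_ltn_trans a1) //=.
rewrite (leq_ltn_trans (size_polyD _ _)) // gtn_max size_polyN.
by rewrite (leq_ltn_trans b1) //= (leq_ltn_trans (size_polyC_leq1 _)).
Qed.

Lemma core2 (e1 e2 e3 : rat) (r1 r2 : algC) :
  (forall t : rat, ~~ root (cubic e1 e2 e3) t) ->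
  root (pQ (cubic e1 e2 e3)) r1 -> root (pQ (cubic e1 e2 e3)) r2 -> r1 != r2 ->
  forall c0 A B : rat, ratr c0 + ratr A * r1 + ratr B * r2 = 0 ->
  [/\ c0 = 0, A = 0 & B = 0].
Proof.
move=> nor rr1 rr2 r12 c0 A B rel.
set g := cubic e1 e2 e3.
have irr : irreducible_poly g by apply: cubic_irreducible; rewrite ?size_cubic.
have rat_no (t : rat) (x : algC) : root (pQ g) x -> x = ratr t -> False.
  by move=> rx ex; move/negP: (nor t); apply; move: rx; rewrite ex fmorph_root.
have [B0|B0] := eqVneq B 0.
  rewrite B0 rmorph0 mul0r addr0 in rel.
  have [A0|A0] := eqVneq A 0.
    rewrite A0 rmorph0 mul0r addr0 in rel.
    by split => //; move/eqP: rel; rewrite fmorph_eq0 => /eqP.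
  exfalso; apply: (rat_no (- c0 / A) r1 rr1).
  rewrite fmorph_div rmorphN /=.
  have nA : (ratr A : algC) != 0 by rewrite fmorph_eq0.
  have hA : ratr A * r1 = - ratr c0 by apply/eqP; rewrite -addr_eq0 addrC rel.
  have -> : r1 = (ratr A * r1) / ratr A by field.
  by rewrite hA; field.
exfalso.
set lam := - A / B; set mu := - c0 / B.
have hr2 : r2 = ratr lam * r1 + ratr mu.
  have hB : ratr B * r2 = - ratr c0 - ratr A * r1.
    transitivity ((ratr c0 + ratr A * r1 + ratr B * r2) - ratr c0 - ratr A * r1); first by ring.
    by rewrite rel sub0r.
  have nB : (ratr B : algC) != 0 by rewrite fmorph_eq0.
  rewrite /lam /mu !fmorph_div !rmorphN /=.
  have -> : r2 = (ratr B * r2) / ratr B by field.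
  by rewrite hB; field.
have lam0 : lam != 0.
  apply/negP => /eqP l0; apply: (rat_no mu r2 rr2); by rewrite hr2 l0 rmorph0 mul0r add0r.
set phi : {poly rat} := lam%:P * 'X + mu%:P.
have evphi (z : algC) : (pQ phi).[z] = ratr lam * z + ratr mu.
  by rewrite /phi rmorphD rmorphM /= !map_polyC map_polyX !hornerE.
have rc : root (pQ (g \Po phi)) r1.
  by rewrite /root map_comp_poly horner_comp evphi -hr2; exact: rr2.
have dv : g %| g \Po phi := princ irr rr1 rc.
have sphi : size phi = 2%N by rewrite /phi size_MXaddC polyC_eq0 (negbTE lam0) size_polyC lam0.
have sgc : size (g \Po phi) = 4%N by rewrite size_comp_poly2 // size_cubic.
have [k hk] := dvdpP _ _ dv.
have g0 : g != 0 by rewrite -size_poly_eq0 size_cubic.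
have k0 : k != 0 by apply/negP => /eqP k0; move: sgc; rewrite hk k0 mul0r size_poly0.
have /size_poly1P [kap _ hkap] : size k == 1%N.
  by move: sgc; rewrite hk size_mul // size_cubic; move: (size k) => n h; apply/eqP; lia.
have F (z : rat) : g.[lam * z + mu] = kap * g.[z].
  have ephi : phi.[z] = lam * z + mu by rewrite /phi !hornerE.
  have := congr1 (fun P => P.[z]) hk; rewrite /= horner_comp hkap hornerM hornerC ephi.
  by [].
have Fe (z : rat) : (lam * z + mu) ^+ 3 - e1 * (lam * z + mu) ^+ 2 + e2 * (lam * z + mu) - e3
    = kap * (z ^+ 3 - e1 * z ^+ 2 + e2 * z - e3).
  by have := F z; rewrite /g !cubic_eval.
pose D (z : rat) := (lam * z + mu) ^+ 3 - e1 * (lam * z + mu) ^+ 2 + e2 * (lam * z + mu) - e3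
    - kap * (z ^+ 3 - e1 * z ^+ 2 + e2 * z - e3).
have hD z : D z = 0 by rewrite /D Fe subrr.
have k3 : kap = lam ^+ 3.
  have : (lam ^+ 3 - kap) * 6%:R = 0.
    transitivity (D 2%:R - 3%:R * D 1 + 3%:R * D 0 - D (-1)); first by rewrite /D; ring.
    by rewrite !hD; ring.
  move=> /eqP; rewrite mulf_eq0 pnatr_eq0 orbF subr_eq0 => /eqP.
  by move=> ->.
have hmu : 3%:R * mu = e1 - lam * e1.
  have : lam ^+ 2 * (3%:R * mu - e1 + lam * e1) * 2%:R = 0.
    transitivity (D 1 + D (-1) - 2%:R * D 0); first by rewrite /D k3; ring.
    by rewrite !hD; ring.
  move=> /eqP; rewrite mulf_eq0 pnatr_eq0 orbF mulf_eq0 expf_eq0 /= (negbTE lam0) /= => h.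
  - move/eqP: h => h; transitivity (3%:R * mu - e1 + lam * e1 + (e1 - lam * e1)); first by ring.
    by rewrite h add0r.
set c := e1 / 3%:R.
have fixc : lam * c + mu = c.
  have -> : mu = (3%:R * mu) / 3%:R by field.
  by rewrite hmu /c; field.
have gc : g.[c] != 0 := nor c.
have l3 : lam ^+ 3 = 1.
  have := F c; rewrite fixc k3 => e.
  have : (1 - lam ^+ 3) * g.[c] = 0 by rewrite mulrBl mul1r -e subrr.
  move/eqP; rewrite mulf_eq0 (negbTE gc) orbF subr_eq0 => /eqP.
  by move=> <-.
have l1 : lam = 1.
  have : (lam - 1) * (lam ^+ 2 + lam + 1) = 0 by rewrite (_ : (lam - 1) * (lam ^+ 2 + lam + 1) = lam ^+ 3 - 1); [rewrite l3 subrr | ring].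
  have q0 : lam ^+ 2 + lam + 1 != 0.
    by rewrite lt0r_neq0 //; nra.
  by move/eqP; rewrite mulf_eq0 (negbTE q0) orbF subr_eq0 => /eqP.
have m0 : mu = 0.
  have : 3%:R * mu = 0 by rewrite hmu l1 mul1r subrr.
  by move/eqP; rewrite mulf_eq0 pnatr_eq0 /= => /eqP.
by move/negP: r12; apply; rewrite hr2 l1 m0 rmorph1 rmorph0 mul1r addr0.
Qed.

Lemma core4 (e1 e2 e3 : rat) (r1 r2 r3 : algC) :
  (forall t : rat, ~~ root (cubic e1 e2 e3) t) ->
  root (pQ (cubic e1 e2 e3)) r1 -> root (pQ (cubic e1 e2 e3)) r2 -> r1 != r2 ->
  r1 + r2 + r3 = ratr e1 -> e1 != 0 ->
  forall d0 d1 d2 d3 : rat,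
  ratr d0 + ratr d1 * r1 + ratr d2 * r2 + ratr d3 * r3 = 0 ->
  [|| d0 == 0, d1 == 0, d2 == 0 | d3 == 0] -> [/\ d0 = 0, d1 = 0, d2 = 0 & d3 = 0].
Proof.
move=> nor rr1 rr2 r12 hs e10 d0 d1 d2 d3 rel hz.
have rel' : ratr (d0 + d3 * e1) + ratr (d1 - d3) * r1 + ratr (d2 - d3) * r2 = 0.
  rewrite rmorphD rmorphM !rmorphB /= -hs.
  transitivity (ratr d0 + ratr d1 * r1 + ratr d2 * r2 + ratr d3 * r3); [ring | exact: rel].
have [h0 h1 h2] := @core2 e1 e2 e3 r1 r2 nor rr1 rr2 r12 _ _ _ rel'.
move/eqP: h1; rewrite subr_eq0 => /eqP h1.
move/eqP: h2; rewrite subr_eq0 => /eqP h2.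
have d30 : d3 = 0.
  case/or4P: hz => /eqP hz.
  - move: h0; rewrite hz add0r => /eqP; rewrite mulf_eq0 (negbTE e10) orbF => /eqP //.
  - by rewrite -h1.
  - by rewrite -h2.
  - by [].
split => //; last by rewrite h2.
- by move: h0; rewrite d30 mul0r addr0.
- by rewrite h1.
Qed.



Lemma psum_Crat (S L y1 y2 y3 : algC) : S \in Crat -> L \in Crat ->
  (forall z, z ^+ 3 - S * z ^+ 2 + L * z - 1 = (z - y1) * (z - y2) * (z - y3)) ->
  forall k, y1 ^+ k + y2 ^+ k + y3 ^+ k \in Crat.
Proof.
move=> hS hL hz.
have [e1 e2 e3] := @vieta _ _ _ _ _ hz.
have rec y : [|| y == y1, y == y2 | y == y3] -> forall k,
    y ^+ k.+3 = S * y ^+ k.+2 - L * y ^+ k.+1 + y ^+ k.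
  move=> hy k.
  have h0 : y ^+ 3 - S * y ^+ 2 + L * y - 1 = 0.
    by rewrite hz; case/or3P: hy => /eqP ->; rewrite subrr ?mulr0 ?mul0r.
  transitivity (y ^+ k * (y ^+ 3 - S * y ^+ 2 + L * y - 1) + (S * y ^+ k.+2 - L * y ^+ k.+1 + y ^+ k)).
    by rewrite !exprS; ring.
  by rewrite h0 mulr0 add0r.
suff H : forall k, [/\ y1 ^+ k + y2 ^+ k + y3 ^+ k \in Crat,
    y1 ^+ k.+1 + y2 ^+ k.+1 + y3 ^+ k.+1 \in Crat &
    y1 ^+ k.+2 + y2 ^+ k.+2 + y3 ^+ k.+2 \in Crat].
  by move=> k; case: (H k).
elim=> [|k [h0 h1 h2]].
  split; first by rewrite !expr0 !rpredD ?rpred1.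
    by rewrite !expr1 e1.
  have -> : y1 ^+ 2 + y2 ^+ 2 + y3 ^+ 2 = (y1 + y2 + y3) ^+ 2 - 2%:R * (y1 * y2 + y1 * y3 + y2 * y3) by ring.
  by rewrite e1 e2 rpredB ?rpredX ?rpredM ?rpred_nat.
split => //.
rewrite (rec y1) ?eqxx // (rec y2) ?eqxx ?orbT // (rec y3) ?eqxx ?orbT //.
have -> : S * y1 ^+ k.+2 - L * y1 ^+ k.+1 + y1 ^+ k + (S * y2 ^+ k.+2 - L * y2 ^+ k.+1 + y2 ^+ k) +
  (S * y3 ^+ k.+2 - L * y3 ^+ k.+1 + y3 ^+ k) = S * (y1 ^+ k.+2 + y2 ^+ k.+2 + y3 ^+ k.+2)
  - L * (y1 ^+ k.+1 + y2 ^+ k.+1 + y3 ^+ k.+1) + (y1 ^+ k + y2 ^+ k + y3 ^+ k) by ring.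
by rewrite rpredD ?rpredB ?rpredM.
Qed.

Lemma sumU_Crat (S L y1 y2 y3 : algC) (U : {poly rat}) : S \in Crat -> L \in Crat ->
  (forall z, z ^+ 3 - S * z ^+ 2 + L * z - 1 = (z - y1) * (z - y2) * (z - y3)) ->
  (pQ U).[y1] + (pQ U).[y2] + (pQ U).[y3] \in Crat.
Proof.
move=> hS hL hz.
rewrite !horner_coef -!big_split /=; apply: rpred_sum => i _.
rewrite -!mulrDr; apply: rpredM; last exact: (@psum_Crat _ _ _ _ _ hS hL hz i).
by rewrite coef_map Crat_rat.
Qed.

Lemma struct l m : (0 < l)%N -> (0 < m)%N -> ~ irreducible_poly (q_Tlm l m) ->
  exists (y1 y2 y3 r1 r2 r3 : algC) (e1 e2 e3 : rat),
  [/\ forall z, (pQ (pC l m)).[z] = (z - y1) * (z - y2) * (z - y3),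
      [/\ r1 ^+ 2 = y1, r2 ^+ 2 = y2 & r3 ^+ 2 = y3],
      [/\ y1 != y2, y1 != y3 & y2 != y3],
      (forall t : rat, ~~ root (cubic e1 e2 e3) t) &
      [/\ forall z, (pQ (cubic e1 e2 e3)).[z] = (z - r1) * (z - r2) * (z - r3),
          r1 + r2 + r3 = ratr e1 & e1 != 0]].
Proof.
move=> l0 m0 nirr.
have [U hU] := red_U l m l0 m0 nirr.
have [y1 [y2 [y3 [d12 d13 d23 hp]]]] := pC_roots l m l0 m0.
set S : algC := (l + m + 3)%:R; set L : algC := (l * m + l + m + 3)%:R.
have hz z : z ^+ 3 - S * z ^+ 2 + L * z - 1 = (z - y1) * (z - y2) * (z - y3).
  by rewrite -pC_eval hp.
have [V1 V2 V3] := @vieta _ _ _ _ _ hz.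
have ry1 : root (pQ (pC l m)) y1 by rewrite /root hp subrr !mul0r.
have ry2 : root (pQ (pC l m)) y2 by rewrite /root hp subrr mulr0 mul0r.
have ry3 : root (pQ (pC l m)) y3 by rewrite /root hp subrr mulr0.
have Tc := @sumU_Crat _ _ _ _ _ U (rpred_nat _ _) (rpred_nat _ _) hz.
have hr1 := hU _ ry1; have hr2 := hU _ ry2; have hr3 := hU _ ry3.
move: Tc hr1 hr2 hr3; move: ((pQ U).[y1]) ((pQ U).[y2]) ((pQ U).[y3]) => r1 r2 r3 Tc hr1 hr2 hr3.
case/CratP: Tc => e1 he1.
have e3sq : (r1 * r2 * r3) ^+ 2 = 1 by rewrite !exprMn hr1 hr2 hr3 V3.
have [e3 he3] : exists e3 : rat, ratr e3 = r1 * r2 * r3.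
  move: e3sq => /eqP; rewrite sqrf_eq1 => /orP [] /eqP ->.
  - by exists 1; rewrite rmorph1.
  - by exists (-1); rewrite rmorphN1.
pose e2 : rat := (e1 ^+ 2 - (l + m + 3)%:R) / 2%:R.
have he2 : ratr e2 = r1 * r2 + r1 * r3 + r2 * r3.
  rewrite /e2 fmorph_div rmorphB rmorphXn /= !rmorph_nat -he1 -/S -V1 -hr1 -hr2 -hr3.
  by field.
exists y1; exists y2; exists y3; exists r1; exists r2; exists r3; exists e1; exists e2; exists e3.
have hg z : (pQ (cubic e1 e2 e3)).[z] = (z - r1) * (z - r2) * (z - r3).
  by rewrite cubic_evalC -he1 he2 he3; ring.
split => //.
- move=> t; apply/negP => rt.
  have : root (pQ (cubic e1 e2 e3)) (ratr t) by rewrite fmorph_root.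
  rewrite /root hg !mulf_eq0 !subr_eq0 => hh.
  have : root (pQ (pC l m)) (ratr (t ^+ 2)).
    rewrite rmorphXn /=; case/orP: hh => [/orP [] | ] /eqP ->.
    + by rewrite hr1.
    + by rewrite hr2.
    + by rewrite hr3.
  by rewrite fmorph_root; apply/negP; apply: pC_noroot.
split => //.
apply/negP => /eqP e0; rewrite e0 rmorph0 in he1.
have ee2 : (r1 * r2 + r1 * r3 + r2 * r3) * 2%:R = - S.
  transitivity ((r1 + r2 + r3) ^+ 2 - (r1 ^+ 2 + r2 ^+ 2 + r3 ^+ 2)); first by ring.
  by rewrite he1 hr1 hr2 hr3 V1; ring.
have eL : (r1 * r2 + r1 * r3 + r2 * r3) ^+ 2 = L.
  transitivity (r1 ^+ 2 * r2 ^+ 2 + r1 ^+ 2 * r3 ^+ 2 + r2 ^+ 2 * r3 ^+ 2 + 2%:R * (r1 * r2 * r3) * (r1 + r2 + r3)); first by ring.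
  by rewrite he1 hr1 hr2 hr3 V2 mulr0 addr0.
have : S ^+ 2 = 4%:R * L.
  rewrite -eL -[S]opprK -ee2; ring.
rewrite /S /L expr2 -!natrM => /eqP; rewrite eqr_nat => /eqP.
move=> e; case: (leqP l m) => h.
  have [d hd] : exists d, m = (l + d)%N by exists (m - l)%N; lia.
  by rewrite hd in e m0; nia.
have [d hd] : exists d, l = (m + d)%N by exists (l - m)%N; lia.
by rewrite hd in e l0; nia.
Qed.



Lemma pos_sq_inj (a b : algC) : 0 < a -> 0 < b -> a ^+ 2 = b ^+ 2 -> a = b.
Proof.
move=> a0 b0 /eqP; rewrite -subr_eq0 subr_sqr mulf_eq0 => /orP [/eqP|ab].
  by move/eqP; rewrite subr_eq0 => /eqP.
by move: ab; rewrite (negbTE (lt0r_neq0 (addr_gt0 a0 b0))).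
Qed.

Lemma gsum (s : seq algC) (c : algC -> rat) (Q : pred algC) (r : algC) :
  (forall x, x \in s -> Q x -> x ^+ 2 = r ^+ 2) ->
  \sum_(x <- s | Q x) ratr (c x) * x =
  ratr (\sum_(x <- s | Q x) c x * (if x == r then 1 else -1)) * r.
Proof.
move=> h; rewrite rmorph_sum mulr_suml big_seq_cond [RHS]big_seq_cond.
apply: eq_bigr => x /andP [xs qx].
case: eqP => [->|ne]; first by rewrite mulr1.
have := h x xs qx; move/eqP; rewrite -subr_eq0 subr_sqr mulf_eq0 subr_eq0 => /orP [/eqP //|].
rewrite addr_eq0 => /eqP ->; rewrite rmorphM rmorphN1 /=; ring.
Qed.

Lemma gsum1 (s : seq algC) (G : algC -> rat) (Q : pred algC) (x0 : algC) :
  uniq s -> x0 \in s -> Q x0 -> (forall x, x \in s -> Q x -> x = x0) ->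
  \sum_(x <- s | Q x) G x = G x0.
Proof.
move=> us x0s qx0 h.
rewrite big_seq_cond (eq_bigl (fun x => (x \in s) && (x == x0))); last first.
  move=> x /=; apply/andP/andP => [[xs qx]|[xs /eqP ->]]; split => //.
  by apply/eqP; apply: h.
rewrite -big_seq_cond -big_filter.
have -> : [seq x <- s | x == x0] = filter (pred1 x0) s by [].
by rewrite filter_pred1_uniq // big_seq1.
Qed.

Lemma sgn_mul0 (a : rat) (b : bool) : a * (if b then 1 else -1) = 0 -> a = 0.
Proof. by case: b; rewrite ?mulr1 ?mulrN1 // => /eqP; rewrite oppr_eq0 => /eqP. Qed.



Theorem theorem2p2 (l m : nat) :
  (0 < l)%N -> (0 < m)%N ->
  ~ irreducible_poly (q_Tlm l m) ->
  forall mu : algC, 0 < mu -> eigenvalue (adjT l m) mu ->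
    Qlin_indep [pred x : algC | [&& 0 < x, eigenvalue (adjT l m) x & x != mu]].
Proof.
move=> l0 m0 nirr mu mu0 emu s c us alls rel.
have [y1 [y2 [y3 [r1 [r2 [r3 [e1 [e2 [e3 [hp [hr1 hr2 hr3] [d12 d13 d23] nor [hg hs e10]]]]]]]]]]] :=
  struct l m l0 m0 nirr.
have rr1 : root (pQ (cubic e1 e2 e3)) r1 by rewrite /root hg subrr !mul0r.
have rr2 : root (pQ (cubic e1 e2 e3)) r2 by rewrite /root hg subrr mulr0 mul0r.
have r12 : r1 != r2 by apply/negP => /eqP e; move/negP: d12; apply; rewrite -hr1 -hr2 e.
have cls (x : algC) : 0 < x -> eigenvalue (adjT l m) x -> x != 1 ->
    [|| x ^+ 2 == y1, x ^+ 2 == y2 | x ^+ 2 == y3].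
  move=> xp ex x1.
  have x21 : x ^+ 2 != 1.
    rewrite sqrf_eq1 negb_or x1 /=; apply/negP => /eqP xm; move: xp.
    by rewrite xm oppr_gt0 ltr10.
  have := eig_q l m x l0 m0 ex x21; rewrite -q_eval q_p_eval hp => /eqP.
  by rewrite !mulf_eq0 !subr_eq0 -orbA.
have inS (x : algC) : x \in s -> [/\ 0 < x, eigenvalue (adjT l m) x & x != mu].
  by move=> xs; move/allP: alls => /(_ x xs); rewrite inE => /and3P.
pose Q0 := fun x : algC => x == 1.
pose Q1 := fun x : algC => (x != 1) && (x ^+ 2 == y1).
pose Q2 := fun x : algC => (x != 1) && (x ^+ 2 != y1) && (x ^+ 2 == y2).
pose Q3 := fun x : algC => (x != 1) && (x ^+ 2 != y1) && (x ^+ 2 != y2).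
have Q3y (x : algC) : x \in s -> Q3 x -> x ^+ 2 = y3.
  move=> xs /andP [/andP [x1 xy1] xy2]; have [xp ex _] := inS x xs.
  by move: (cls x xp ex x1); rewrite (negbTE xy1) (negbTE xy2) /= => /eqP.
have dec : \sum_(x <- s) ratr (c x) * x =
    \sum_(x <- s | Q0 x) ratr (c x) * x + (\sum_(x <- s | Q1 x) ratr (c x) * x +
    (\sum_(x <- s | Q2 x) ratr (c x) * x + \sum_(x <- s | Q3 x) ratr (c x) * x)).
  rewrite (bigID Q0) /=; congr (_ + _).
  rewrite (bigID (fun x => x ^+ 2 == y1)) /=; congr (_ + _).
  by rewrite (bigID (fun x => x ^+ 2 == y2)) /=.
rewrite dec in rel.
rewrite (@gsum s c Q0 1) in rel; last by move=> x _ /eqP ->.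
rewrite (@gsum s c Q1 r1) in rel; last by move=> x _ /andP [_ /eqP ->].
rewrite (@gsum s c Q2 r2) in rel; last by move=> x _ /andP [_ /eqP ->].
rewrite (@gsum s c Q3 r3) in rel; last by move=> x xs q; rewrite hr3 Q3y.
set D0 := \sum_(x <- s | Q0 x) _ in rel.
set D1 := \sum_(x <- s | Q1 x) _ in rel.
set D2 := \sum_(x <- s | Q2 x) _ in rel.
set D3 := \sum_(x <- s | Q3 x) _ in rel.
have rel' : ratr D0 + ratr D1 * r1 + ratr D2 * r2 + ratr D3 * r3 = 0.
  by rewrite -rel mulr1 !addrA.
have zeroD (Q : pred algC) (F : algC -> rat) :
    (forall x, x \in s -> Q x -> x = mu) -> \sum_(x <- s | Q x) F x = 0.
  move=> h; rewrite big_seq_cond big1 // => x /andP [xs qx].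
  by have [_ _] := inS x xs; rewrite (h x xs qx) eqxx.
have hz : [|| D0 == 0, D1 == 0, D2 == 0 | D3 == 0].
  have [m1|m1] := eqVneq mu 1.
    by apply/orP; left; apply/eqP; apply: zeroD => x _ /eqP ->.
  case/or3P: (cls mu mu0 emu m1) => /eqP hm.
  - apply/or4P; apply: Or42; apply/eqP; apply: zeroD => x xs /andP [_ /eqP h].
    by have [xp _ _] := inS x xs; apply: pos_sq_inj => //; rewrite h hm.
  - apply/or4P; apply: Or43; apply/eqP; apply: zeroD => x xs /andP [_ /eqP h].
    by have [xp _ _] := inS x xs; apply: pos_sq_inj => //; rewrite h hm.
  - apply/or4P; apply: Or44; apply/eqP; apply: zeroD => x xs q.
    by have [xp _ _] := inS x xs; apply: pos_sq_inj => //; rewrite Q3y // hm.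
have [z0 z1 z2 z3] := @core4 e1 e2 e3 r1 r2 r3 nor rr1 rr2 r12 hs e10 D0 D1 D2 D3 rel' hz.
apply/allP => x xs; apply/eqP.
have [xp ex xmu] := inS x xs.
have uniqx (Q : pred algC) : Q x -> (forall z, z \in s -> Q z -> z ^+ 2 = x ^+ 2) ->
    forall z, z \in s -> Q z -> z = x.
  move=> _ h z zs qz; have [zp _ _] := inS z zs; exact: pos_sq_inj zp xp (h z zs qz).
have [x1|x1] := eqVneq x 1.
  have q0 : Q0 x by rewrite /Q0 x1.
  move: z0; rewrite /D0 (@gsum1 s _ Q0 x us xs q0); first exact: sgn_mul0.
  by move=> z _ /eqP ->; rewrite x1.
have [h1|h1] := eqVneq (x ^+ 2) y1.
  have q1 : Q1 x by rewrite /Q1 x1 h1 eqxx.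
  move: z1; rewrite /D1 (@gsum1 s _ Q1 x us xs q1); first exact: sgn_mul0.
  by apply: uniqx => // z _ /andP [_ /eqP ->].
have [h2|h2] := eqVneq (x ^+ 2) y2.
  have q2 : Q2 x by rewrite /Q2 x1 h1 h2 eqxx.
  move: z2; rewrite /D2 (@gsum1 s _ Q2 x us xs q2); first exact: sgn_mul0.
  by apply: uniqx => // z _ /andP [_ /eqP ->].
have q3 : Q3 x by rewrite /Q3 x1 h1 h2.
move: z3; rewrite /D3 (@gsum1 s _ Q3 x us xs q3); first exact: sgn_mul0.
apply: uniqx => // z zs qz; rewrite !Q3y //.
Qed.
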